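(* Let $p\geq 3$. Every $p$-regular hamiltonian graph is linked to a $p$-hamiltonian graph. Every $p$-regular hamiltonian 3-edge-connected graph is 3-linked to a 3-edge-connected $p$-hamiltonian graph.
   Context: All graphs are finite and connected; loops and multiple edges are allowed. Valency counts half-edges (a loop counts twice); $p$-regular means every vertex has valency $p$. A graph is hamiltonian if it has at least 2 vertices and contains a cycle (connected 2-regular subgraph) through every vertex; $p$-hamiltonian means $p$-regular, hamiltonian and loopless. $\Gamma/e$ denotes contraction of the edge $e$. Strongly linked: there are non-loop edges $e_i\in E(\Gamma_i)$ and an isomorphism $\Gamma_1/e_1\cong\Gamma_2/e_2$ carrying the image vertex of $e_1$ to that of $e_2$. Linked: joined by a finite chain of consecutively strongly linked graphs. 3-edge-connected: at least one vertex and connected after removal of any fewer than 3 edges. 3-linked: linked through a chain of 3-edge-connected graphs. *)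

(* Defs.v *)
From mathcomp Require Import all_boot.
Set Implicit Arguments. Unset Strict Implicit. Unset Printing Implicit Defensive.

(* A finite multigraph: finite vertex set, finite edge set, and each edge has
   two end-vertices (an ordered pair, the orientation being irrelevant: all
   notions below are invariant under swapping). *)
Record graph := Graph {
  gV : finType;
  gE : finType;
  ends : gE -> gV * gV
}.

Definition is_loop (G : graph) (e : gE G) : bool := (ends e).1 == (ends e).2.

Definition loopless (G : graph) : Prop := forall e : gE G, ~~ is_loop e.

Definition adj (G : graph) : rel (gV G) :=
  fun x y => [exists e : gE G, (ends e == (x, y)) || (ends e == (y, x))].

Definition connected (G : graph) : Prop :=
  0 < #|gV G| /\ forall x y : gV G, connect (@adj G) x y.

(* valency counts half-edges; a loop counts twice *)
Definition valency (G : graph) (x : gV G) : nat :=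
  #|[set e : gE G | (ends e).1 == x]| + #|[set e : gE G | (ends e).2 == x]|.

Definition regular (p : nat) (G : graph) : Prop :=
  forall x : gV G, valency x = p.

Definition subgraph (G : graph) (C : {set gE G}) : graph :=
  @Graph (gV G) {e : gE G | e \in C} (fun e => ends (val e)).

(* hamiltonian: >= 2 vertices and a cycle (connected 2-regular subgraph)
   through every vertex, i.e. a connected 2-regular spanning subgraph *)
Definition hamiltonian (G : graph) : Prop :=
  1 < #|gV G| /\
  exists C : {set gE G}, connected (subgraph C) /\ regular 2 (subgraph C).

Definition p_hamiltonian (p : nat) (G : graph) : Prop :=
  regular p G /\ hamiltonian G /\ loopless G.

Definition three_edge_connected (G : graph) : Prop :=
  0 < #|gV G| /\
  forall S : {set gE G}, #|S| < 3 -> connected (subgraph (~: S)).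

(* Contraction of a non-loop edge e with ends (u, v): the vertex v is merged
   into u, e is deleted, all other edges are kept (parallel copies of e become
   loops at u).  The image vertex of e is u. *)
Section Contract.
Variables (G : graph) (e : gE G) (He : (ends e).1 != (ends e).2).

Definition cV : finType := {x : gV G | x != (ends e).2}.
Definition cE : finType := {f : gE G | f != e}.
Definition contract_vertex : cV := exist _ (ends e).1 He.
Definition cmap (x : gV G) : cV := odflt contract_vertex (insub x).
Definition contract : graph :=
  @Graph cV cE (fun f => (cmap (ends (val f)).1, cmap (ends (val f)).2)).
End Contract.

Definition iso_at (G H : graph) (a : gV G) (b : gV H) : Prop :=
  exists (fV : gV G -> gV H) (fE : gE G -> gE H),
    [/\ bijective fV, bijective fE,
        forall e : gE G,
          ends (fE e) = (fV (ends e).1, fV (ends e).2) \/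
          ends (fE e) = (fV (ends e).2, fV (ends e).1)
      & fV a = b].

Definition strongly_linked (G1 G2 : graph) : Prop :=
  exists (e1 : gE G1) (H1 : (ends e1).1 != (ends e1).2)
         (e2 : gE G2) (H2 : (ends e2).1 != (ends e2).2),
    @iso_at (contract H1) (contract H2) (contract_vertex H1) (contract_vertex H2).

Inductive chain (P : graph -> Prop) : graph -> graph -> Prop :=
| chain_refl G : P G -> chain P G G
| chain_step G H K : P G -> strongly_linked G H -> chain P H K -> chain P G K.

Definition linked (G H : graph) : Prop := chain connected G H.
Definition three_linked (G H : graph) : Prop := chain three_edge_connected G H.

(* Main.v *)
Require Import Defs.
From mathcomp Require Import all_boot.
From Stdlib Require Import FunctionalExtensionality.
Set Implicit Arguments. Unset Strict Implicit. Unset Printing Implicit Defensive.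


Definition mm (V E : finType) (en : E -> V * V) (f : E) (z : V) : nat :=
  ((en f).1 == z) + ((en f).2 == z).

Lemma card_predE (T : finType) (Q : pred T) : #|[set x | Q x]| = \sum_x (Q x : nat).
Proof.
rewrite -sum1dep_card big_mkcond /=; apply: eq_bigr => x _; by case: (Q x).
Qed.

Lemma valencyE (V E : finType) (en : E -> V * V) z :
  @valency (Graph en) z = \sum_f mm en f z.
Proof.
rewrite /valency /= !card_predE -big_split /=; apply: eq_bigr => f _ //.
Qed.

Lemma card_sub_pred (E : finType) (C : {set E}) (P : pred E) :
  #|[set f : {f | f \in C} | P (val f)]| = #|[set f | (f \in C) && P f]|.
Proof.
rewrite -(card_imset _ val_inj); apply: eq_card => f; rewrite !inE.
apply/imsetP/andP.
- by case=> g; rewrite inE => Pg ->; split => //; apply: valP.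
- case=> Cf Pf; exists (exist _ f Cf) => //; by rewrite inE.
Qed.

Lemma valency_sub (V E : finType) (en : E -> V * V) (C : {set E}) z :
  @valency (@subgraph (Graph en) C) z = \sum_(f in C) mm en f z.
Proof.
rewrite /valency /=.
rewrite (card_sub_pred C (fun f => (en f).1 == z)).
rewrite (card_sub_pred C (fun f => (en f).2 == z)).
rewrite !card_predE -big_split /= [RHS]big_mkcond /=; apply: eq_bigr => f _.
by rewrite /mm; case: (f \in C).
Qed.

Lemma adj_sym (G : graph) : symmetric (@adj G).
Proof.
move=> x y; rewrite /adj; apply/existsP/existsP => -[e He]; exists e; by rewrite orbC.
Qed.

Lemma transfer (V E1 E2 : finType) (en1 : E1 -> V * V) (en2 : E2 -> V * V) :
  connected (Graph en1) ->
  (forall f, connect (@adj (Graph en2)) (en1 f).1 (en1 f).2) ->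
  connected (Graph en2).
Proof.
case=> H0 Hc Hf; split => // x y.
apply: (connect_sub _ (Hc x y)) => a b /existsP [f /orP [] /eqP /= Ef].
- by have := Hf f; rewrite Ef.
- have := Hf f; rewrite Ef /=; by rewrite (sym_connect_sym (@adj_sym (Graph en2))).
Qed.


Definition coll (V : eqType) (u v z : V) := if z == v then u else z.

Lemma cmap_val (G : graph) (e : gE G) (He : (ends e).1 != (ends e).2) z :
  val (cmap He z) = coll (ends e).1 (ends e).2 z.
Proof.
rewrite /cmap /coll; case: insubP => [w Hw ->|Hz] /=.
- by rewrite (negbTE Hw).
- by move: Hz; rewrite negbK => ->.
Qed.

Lemma cmap_sval (G : graph) (e : gE G) (He : (ends e).1 != (ends e).2) z :
  sval (cmap He z) = coll (ends e).1 (ends e).2 z.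
Proof. exact: cmap_val. Qed.

Lemma cmap_graph (V E : finType) (en : E -> V * V) e (He : (en e).1 != (en e).2) z :
  sval (@cmap (Graph en) e He z) = coll (en e).1 (en e).2 z.
Proof. exact: cmap_val. Qed.

Lemma sig_eq (T : eqType) (P : pred T) (x y : {z | P z}) : sval x = sval y -> x = y.
Proof. exact: val_inj. Qed.

Lemma resplit (V E : finType) (en en' : E -> V * V) (e : E)
  (He : (en e).1 != (en e).2) (Hee : en' e = en e)
  (Hf : forall f, f != e ->
     coll (en e).1 (en e).2 (en' f).1 = coll (en e).1 (en e).2 (en f).1 /\
     coll (en e).1 (en e).2 (en' f).2 = coll (en e).1 (en e).2 (en f).2) :
  strongly_linked (Graph en) (Graph en').
Proof.
have He' : (en' e).1 != (en' e).2 by rewrite Hee.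
exists e, He, e, He'.
have P1 : forall x : V, x != (en e).2 -> x != (en' e).2 by move=> x; rewrite Hee.
have P2 : forall x : V, x != (en' e).2 -> x != (en e).2 by move=> x; rewrite Hee.
pose fV (x : gV (@contract (Graph en) e He)) : gV (@contract (Graph en') e He') := exist _ (val x) (P1 _ (valP x)).
pose gW (x : gV (@contract (Graph en') e He')) : gV (@contract (Graph en) e He) := exist _ (val x) (P2 _ (valP x)).
exists fV, id; split.
- by exists gW => x; apply: val_inj.
- by exists id.
- move=> f; left; have [E1 E2] := Hf (sval f) (svalP f).
  congr pair; apply: sig_eq.
  + refine (etrans (@cmap_graph V E en' e He' _) (etrans _ (esym (@cmap_graph V E en e He _)))).
    by rewrite Hee.
  + refine (etrans (@cmap_graph V E en' e He' _) (etrans _ (esym (@cmap_graph V E en e He _)))).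
    by rewrite Hee.
- by apply: val_inj; rewrite /= Hee.
Qed.


Lemma adjS (V E : finType) (en : E -> V * V) (S : {set E}) f :
  f \notin S -> @adj (@subgraph (Graph en) (~: S)) (en f).1 (en f).2.
Proof.
move=> fS; apply/existsP; have fS' : f \in ~: S by rewrite inE.
by exists (exist _ f fS'); rewrite /= -surjective_pairing eqxx.
Qed.

Lemma connect_symG (G : graph) x y : connect (@adj G) x y -> connect (@adj G) y x.
Proof. by rewrite (sym_connect_sym (@adj_sym G)). Qed.

Lemma move_conn (V E : finType) (en en' : E -> V * V) l h x y
  (Hl : en l = (x, x)) (Hl' : en' l = (x, y))
  (Hh : ((en h).1 = y /\ en' h = (x, (en h).2)) \/ ((en h).2 = y /\ en' h = ((en h).1, x)))
  (Hhl : h != l) (Hoth : forall f, f != l -> f != h -> en' f = en f) (S : {set E}) :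
  connected (@subgraph (Graph en) (~: (if l \in S then S :\ l :|: [set h] else S))) ->
  connected (@subgraph (Graph en') (~: S)).
Proof.
move=> Hc; apply: (transfer Hc) => -[f /= Hf].
have unch : f != l -> f != h -> f \notin S ->
    connect (@adj (@subgraph (Graph en') (~: S))) (en f).1 (en f).2.
  move=> fl fh fS; apply: connect1; rewrite -(Hoth f fl fh); exact: adjS.
case lS: (l \in S) Hf => Hf.
- case: (eqVneq f l) => [->|fl]; first by rewrite Hl connect0.
  move: Hf; rewrite !inE negb_or negb_and negbK (negbTE fl) /= => /andP [fS fh].
  exact: unch.
- case: (eqVneq f l) => [->|fl]; first by rewrite Hl connect0.
  move: Hf; rewrite inE => fS.
  case: (eqVneq f h) => [Efh|fh]; last exact: unch.
  subst f.
  have lxy : connect (@adj (@subgraph (Graph en') (~: S))) x y.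
    by apply: connect1; have := adjS en' (negbT lS); rewrite Hl'.
  have hS := adjS en' fS.
  case: Hh => -[Ey Eh']; rewrite Eh' /= in hS.
  + rewrite Ey; apply: connect_trans (connect_symG lxy) (connect1 hS).
  + rewrite Ey; apply: connect_trans (connect1 hS) lxy.
Qed.

Lemma conn_full (V E : finType) (en : E -> V * V) :
  connected (Graph en) <-> connected (@subgraph (Graph en) (~: set0)).
Proof.
split=> Hc; apply: (transfer Hc) => f.
- by apply: connect1; apply: adjS; rewrite in_set0.
- apply: connect1; apply/existsP; exists (val f); by rewrite /= -surjective_pairing eqxx.
Qed.

Lemma move_connected (V E : finType) (en en' : E -> V * V) l h x y
  (Hl : en l = (x, x)) (Hl' : en' l = (x, y))
  (Hh : ((en h).1 = y /\ en' h = (x, (en h).2)) \/ ((en h).2 = y /\ en' h = ((en h).1, x)))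
  (Hhl : h != l) (Hoth : forall f, f != l -> f != h -> en' f = en f) :
  connected (Graph en) -> connected (Graph en').
Proof.
move=> /conn_full Hc; apply/conn_full.
apply: (move_conn Hl Hl' Hh Hhl Hoth); by rewrite in_set0.
Qed.

Lemma move_3ec (V E : finType) (en en' : E -> V * V) l h x y
  (Hl : en l = (x, x)) (Hl' : en' l = (x, y))
  (Hh : ((en h).1 = y /\ en' h = (x, (en h).2)) \/ ((en h).2 = y /\ en' h = ((en h).1, x)))
  (Hhl : h != l) (Hoth : forall f, f != l -> f != h -> en' f = en f) :
  three_edge_connected (Graph en) -> three_edge_connected (Graph en').
Proof.
case=> H0 H3; split => // S HS.
apply: (move_conn Hl Hl' Hh Hhl Hoth); apply: H3.
case lS: (l \in S) => //.
rewrite setUC cardsU1 (cardsD1 l S) lS in HS *.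
apply: leq_ltn_trans HS; rewrite add1n; case: (h \notin _) => //.
Qed.


Lemma mm_gt0 (V E : finType) (en : E -> V * V) f x :
  (0 < mm en f x) = ((en f).1 == x) || ((en f).2 == x).
Proof. by rewrite /mm; case: ((en f).1 == x); case: ((en f).2 == x). Qed.

Lemma find_e (V E : finType) (en : E -> V * V) (C : {set E}) x :
  connected (@subgraph (Graph en) C) -> 1 < #|V| ->
  exists e, [/\ e \in C, (en e).1 != (en e).2 & 0 < mm en e x].
Proof.
move=> Hcon HV.
case: (boolP [exists e, [&& e \in C, (en e).1 != (en e).2 & 0 < mm en e x]]).
  by move=> /existsP [e /and3P [? ? ?]]; exists e.
move/existsPn=> Hn; exfalso; case: Hcon => _ Hc.
move/card_gt1P: HV => [a [b [_ _ ab]]].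
pose y := if a == x then b else a.
have yx : y != x.
  rewrite /y; case: (eqVneq a x) => [ax|//]; by rewrite -ax eq_sym.
have cl : closed (@adj (@subgraph (Graph en) C)) (pred1 x).
  move=> u v /existsP [f Ef].
  have := Hn (val f); rewrite (valP f) /= mm_gt0 negb_and negbK.
  move: Ef => /orP [] /eqP /= ->; rewrite /= !inE.
  + case: (eqVneq u v) => [->//|uv] /=; rewrite negb_or => /andP [/negbTE -> /negbTE ->] //.
  + case: (eqVneq v u) => [->//|uv] /=; rewrite negb_or => /andP [/negbTE -> /negbTE ->] //.
have := closed_connect cl (Hc x y); rewrite !inE eqxx => /esym/eqP; exact/eqP.
Qed.

Lemma split_sum (E : finType) (C : {set E}) (F : E -> nat) :
  \sum_f F f = \sum_(f in C) F f + \sum_(f | f \notin C) F f.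
Proof. by rewrite (bigID (fun f => f \in C)). Qed.

Lemma mm_loop (V E : finType) (en : E -> V * V) l x z :
  en l = (x, x) -> mm en l z = ((x == z) + (x == z))%N.
Proof. by rewrite /mm => ->. Qed.

Lemma l_notin (V E : finType) (en : E -> V * V) (C : {set E}) l e x :
  \sum_(f in C) mm en f x = 2 -> e \in C -> (en e).1 != (en e).2 ->
  0 < mm en e x -> en l = (x, x) -> l \notin C.
Proof.
move=> H eC eL ex Hl; apply/negP => lC.
have el : e != l by apply: contraNneq eL => ->; rewrite Hl.
have side : (e \in C) && (e != l) by rewrite eC el.
rewrite (bigD1 l lC) /= (bigD1 e side) /= in H.
move: H; rewrite (mm_loop _ Hl) eqxx /= => /eqP.
rewrite -[2]addn0 eqn_add2l addn_eq0 => /andP [/eqP E0 _]; by rewrite E0 in ex.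
Qed.

Lemma find_h (V E : finType) (en : E -> V * V) (C : {set E}) l x y p :
  (forall z, \sum_f mm en f z = p) -> (forall z, \sum_(f in C) mm en f z = 2) ->
  en l = (x, x) -> l \notin C -> x != y ->
  exists h, [/\ h \notin C, 0 < mm en h y & ((en h).1 == (en h).2) || (mm en h x == 0)].
Proof.
move=> Hp HC Hl lC xy.
case: (boolP [exists h, [&& h \notin C, 0 < mm en h y & ((en h).1 == (en h).2) || (mm en h x == 0)]]).
  by move=> /existsP [h /and3P [? ? ?]]; exists h.
move/existsPn=> Hn; exfalso.
have Hk : \sum_(f | f \notin C) mm en f y + 2 <= \sum_(f | f \notin C) mm en f x.
  rewrite (bigD1 l lC) [X in _ <= X](bigD1 l lC) /= !(mm_loop _ Hl) eqxx (negbTE xy) /=.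
  rewrite add0n addnC leq_add2l; apply: leq_sum => f /andP [fC fl].
  have := Hn f; rewrite fC /=; case: (posnP (mm en f y)) => [->//|fy] /=.
  rewrite negb_or -lt0n => /andP [fL fx]; apply: leq_trans fx.
  move: fL; rewrite /mm; case: (eqVneq (en f).1 y) => [->|] //=; first by rewrite eq_sym => /negbTE ->.
  by case: ((en f).2 == y).
have := Hp y; rewrite (split_sum C) HC => /esym Hy.
have := Hp x; rewrite (split_sum C) HC => /esym Hx.
move: Hk; rewrite Hy in Hx; move/addnI: Hx => ->.
by rewrite leqNgt addn2 ltnS leqnSn.
Qed.

Lemma coll_mem (V : eqType) (u v z : V) : (z == u) || (z == v) -> coll u v z = u.
Proof. rewrite /coll; case: (eqVneq z v) => // _; rewrite orbF => /eqP //. Qed.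

Lemma step (p : nat) (V E : finType) (en : E -> V * V) (C : {set E}) l :
  (forall z, \sum_f mm en f z = p) -> (forall z, \sum_(f in C) mm en f z = 2) ->
  connected (@subgraph (Graph en) C) -> 1 < #|V| -> (en l).1 == (en l).2 ->
  exists en' h x y,
   [/\ en l = (x, x), en' l = (x, y),
       ((en h).1 = y /\ en' h = (x, (en h).2)) \/ ((en h).2 = y /\ en' h = ((en h).1, x)),
       h != l & forall f, f != l -> f != h -> en' f = en f] /\
   [/\ strongly_linked (Graph en) (Graph en'), forall z, \sum_f mm en' f z = p,
       forall f, f \in C -> en' f = en f &
       #|[set f | (en' f).1 == (en' f).2]| < #|[set f | (en f).1 == (en f).2]| ].
Proof.
move=> Hp HC Hcon HV lL.
set x := (en l).1.
have Hl : en l = (x, x) by rewrite [en l]surjective_pairing -(eqP lL).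
have [e [eC eL ex]] := find_e x Hcon HV.
set u := (en e).1 in eL ex *; set v := (en e).2 in eL ex *.
pose y := if u == x then v else u.
have xy : x != y.
  rewrite /y; move: ex; rewrite mm_gt0 -/u -/v.
  case: (eqVneq u x) => [<-|ux] //= /eqP <-; by rewrite eq_sym.
have xuv : (x == u) || (x == v).
  by move: ex; rewrite mm_gt0 -/u -/v ![_ == x]eq_sym orbC.
have yuv : (y == u) || (y == v).
  by rewrite /y; case: (u == x); rewrite eqxx ?orbT.
have lC := l_notin (HC x) eC eL ex Hl.
have [h [hC hy hcond]] := find_h Hp HC Hl lC xy.
have hl : h != l.
  by apply/eqP => Ehl; move: hy; rewrite Ehl (mm_loop _ Hl) (negbTE xy).
pose en' f := if f == l then (x, y)
              else if f == h then (if (en h).1 == y then (x, (en h).2) else ((en h).1, x))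
              else en f.
have Hl' : en' l = (x, y) by rewrite /en' eqxx.
have Hh' : en' h = (if (en h).1 == y then (x, (en h).2) else ((en h).1, x)).
  by rewrite /en' (negbTE hl) eqxx.
have Hoth : forall f, f != l -> f != h -> en' f = en f.
  by move=> f fl fh; rewrite /en' (negbTE fl) (negbTE fh).
have Hh : ((en h).1 = y /\ en' h = (x, (en h).2)) \/ ((en h).2 = y /\ en' h = ((en h).1, x)).
  rewrite Hh'; case: (eqVneq (en h).1 y) => [->|h1y]; first by left.
  by right; split => //; apply/eqP; move: hy; rewrite mm_gt0 (negbTE h1y).
have el : e != l by apply: contraNneq lC => <-.
have eh : e != h by apply: contraNneq hC => <-.
exists en', h, x, y; split; first by split.
split.
- apply: (@resplit V E en en' e eL); first by rewrite Hoth.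
  move=> f fe; rewrite -/u -/v.
  have cx := coll_mem xuv; have cy := coll_mem yuv.
  case: (eqVneq f l) => [->|fl]; first by rewrite Hl Hl' /= cx cy.
  case: (eqVneq f h) => [->|fh]; last by rewrite Hoth.
  by case: Hh => -[Ey ->]; rewrite /= Ey ?cx ?cy.
- move=> z; rewrite -(Hp z) (bigD1 l) //= [in RHS](bigD1 l) //=.
  have hl' : true && (h != l) by [].
  rewrite (bigD1 h hl') /= [in RHS](bigD1 h hl') /=.
  rewrite !addnA; congr addn.
    rewrite (mm_loop _ Hl) /mm Hl' /=.
    case: Hh => -[Ey ->]; rewrite /= Ey;
      by case: (x == z); case: (y == z); case: (_ == z).
  by apply: eq_bigr => f /andP [fl fh]; rewrite /mm Hoth.
- move=> f fC; apply: Hoth; [apply: contraNneq lC => <- | apply: contraNneq hC => <-] => //.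
- apply: proper_card; apply/properP; split.
    apply/subsetP => f; rewrite !inE.
    case: (eqVneq f l) => [->|fl]; first by rewrite Hl' /= (negbTE xy).
    case: (eqVneq f h) => [->|fh]; last by rewrite Hoth.
    move: hcond; rewrite /mm.
    case: Hh => -[Ey ->] /=; rewrite Ey => H /eqP Ex; move: H.
      by rewrite -Ex eqxx (eq_sym y x) (negbTE xy).
    by rewrite Ex eqxx (eq_sym y x) (negbTE xy).
  by exists l; rewrite !inE ?Hl ?Hl' ?eqxx // (negbTE xy).
Qed.


Definition moveQ (Q : graph -> Prop) := forall (V E : finType) (en en' : E -> V * V) l h x y,
  en l = (x, x) -> en' l = (x, y) ->
  ((en h).1 = y /\ en' h = (x, (en h).2)) \/ ((en h).2 = y /\ en' h = ((en h).1, x)) ->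
  h != l -> (forall f, f != l -> f != h -> en' f = en f) ->
  Q (Graph en) -> Q (Graph en').

Lemma induct (p : nat) (Q : graph -> Prop) (HQ : moveQ Q) (V E : finType) n :
  forall (en : E -> V * V) (C : {set E}),
  #|[set f | (en f).1 == (en f).2]| <= n ->
  (forall z, \sum_f mm en f z = p) -> (forall z, \sum_(f in C) mm en f z = 2) ->
  connected (@subgraph (Graph en) C) -> 1 < #|V| -> Q (Graph en) ->
  exists en' : E -> V * V, [/\ chain Q (Graph en) (Graph en'),
    (forall z, \sum_f mm en' f z = p), (forall z, \sum_(f in C) mm en' f z = 2),
    connected (@subgraph (Graph en') C) & Q (Graph en') /\ (forall f, (en' f).1 != (en' f).2)].
Proof.
elim: n => [|n IH] en C Hn Hp HC Hcon HV HQG.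
  exists en; split => //; first exact: chain_refl.
  split => // f; apply/negP => fL.
  have : f \in [set f | (en f).1 == (en f).2] by rewrite inE.
  by move: Hn; rewrite leqn0 => /eqP/cards0_eq ->; rewrite in_set0.
case: (boolP [exists f, (en f).1 == (en f).2]); last first.
  move/existsPn => Hnl; exists en; split => //; first exact: chain_refl.
case/existsP => l lL.
have [en' [h [x [y [[Hl Hl' Hh hl Hoth] [Hsl Hp' HCeq Hlt]]]]]] := step Hp HC Hcon HV lL.
have Esub : @subgraph (Graph en') C = @subgraph (Graph en) C.
  rewrite /subgraph /=; f_equal; apply: functional_extensionality => f.
  exact: HCeq (val f) (valP f).
have HC' : forall z, \sum_(f in C) mm en' f z = 2.
  by move=> z; rewrite -(HC z); apply: eq_bigr => f fC; rewrite /mm HCeq.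
have Hcon' : connected (@subgraph (Graph en') C) by rewrite Esub.
have HQ' := HQ V E en en' l h x y Hl Hl' Hh hl Hoth HQG.
have Hn' : #|[set f | (en' f).1 == (en' f).2]| <= n by rewrite -ltnS; apply: leq_trans Hlt Hn.
have [en'' [Hch Hp'' HC'' Hcon'' [HQ'' Hloop]]] := IH en' C Hn' Hp' HC' Hcon' HV HQ'.
exists en''; split => //.
exact: (chain_step HQG Hsl Hch).
Qed.

Lemma main_gen (p : nat) (Q : graph -> Prop) (HQ : moveQ Q) (G : graph) :
  regular p G -> hamiltonian G -> Q G ->
  exists H : graph, Q H /\ p_hamiltonian p H /\ chain Q G H.
Proof.
case: G => V E en Hreg [HV [C [Hcon HCr]]] HQG.
have Hp : forall z, \sum_f mm en f z = p by move=> z; rewrite -valencyE; exact: Hreg.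
have HC : forall z, \sum_(f in C) mm en f z = 2 by move=> z; rewrite -valency_sub; exact: HCr.
have [en' [Hch Hp' HC' Hcon' [HQ' Hloop]]] := induct HQ (leqnn _) Hp HC Hcon HV HQG.
exists (Graph en'); split => //; split => //; split; [|split].
- by move=> z; rewrite valencyE.
- split; first exact: HV.
  exists C; split => // z; by rewrite valency_sub.
- exact: Hloop.
Qed.


Theorem mainTheorem3 (p : nat) (hp : 3 <= p) :
  (forall G : graph, connected G -> regular p G -> hamiltonian G ->
     exists H : graph, connected H /\ p_hamiltonian p H /\ linked G H) /\
  (forall G : graph, connected G -> regular p G -> hamiltonian G ->
     three_edge_connected G ->
     exists H : graph, three_edge_connected H /\ p_hamiltonian p H /\
                       three_linked G H).
Proof.
split.
- move=> G Hc Hr Hh.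
  have HQ : moveQ connected.
    move=> V E en en' l h x y Hl Hl' Hh' hl Ho; exact: move_connected Hl Hl' Hh' hl Ho.
  exact: (main_gen HQ Hr Hh Hc).
- move=> G _ Hr Hh H3.
  have HQ : moveQ three_edge_connected.
    move=> V E en en' l h x y Hl Hl' Hh' hl Ho; exact: move_3ec Hl Hl' Hh' hl Ho.
  exact: (main_gen HQ Hr Hh H3).
Qed.
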